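(* Let $X$ be a metrizable space which is locally compact and $\sigma$-compact, and let $f\colon X\to X$ be a homeomorphism which is metric-independent expansive. Then $f^n$ is metric-independent expansive for every integer $n\neq 0$.
   Context: A homeomorphism $f$ of a metric space $(X,d)$ is expansive with respect to $d$ if there is $c>0$ such that for all $x\neq y$ there is $i\in\mathbb Z$ with $d(f^i(x),f^i(y))>c$. It is metric-independent expansive if it is expansive with respect to every metric compatible with the topology of $X$. *)

(* Defs.v *)
From HB Require Import structures.
From mathcomp Require Import all_boot all_order all_algebra.
From mathcomp Require Import all_classical all_reals all_analysis.
From mathcomp Require Import Rstruct Rstruct_topology.
Set Implicit Arguments. Unset Strict Implicit. Unset Printing Implicit Defensive.
Import Order.TTheory GRing.Theory Num.Theory.
Local Open Scope classical_set_scope.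
Local Open Scope ring_scope.

Notation Real := Rdefinitions.R.

Definition is_metric (X : Type) (d : X -> X -> Real) : Prop :=
  (forall x y, 0 <= d x y) /\
  (forall x y, d x y = 0 <-> x = y) /\
  (forall x y, d x y = d y x) /\
  (forall x y z, d x z <= d x y + d y z).

Definition compatible_metric (X : topologicalType) (d : X -> X -> Real) : Prop :=
  is_metric d /\
  forall A : set X, open A <->
    (forall x, A x -> exists2 e : Real, 0 < e & [set y | d x y < e] `<=` A).

Definition metrizable (X : topologicalType) : Prop :=
  exists d : X -> X -> Real, compatible_metric d.

Definition sigma_compact (X : topologicalType) : Prop :=
  exists K : nat -> set X, (forall n, compact (K n)) /\ \bigcup_n K n = setT.

Definition homeomorphism_with_inverse (X : topologicalType) (f g : X -> X) : Prop :=
  continuous f /\ continuous g /\ cancel f g /\ cancel g f.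

Definition zpow_map (X : Type) (h hinv : X -> X) (i : int) : X -> X :=
  match i with
  | Posz n => iter n h
  | Negz n => iter n.+1 hinv
  end.

Definition expansive_wrt (X : Type) (h hinv : X -> X) (d : X -> X -> Real) : Prop :=
  exists2 c : Real, 0 < c &
    forall x y : X, x <> y -> exists i : int,
      d (zpow_map h hinv i x) (zpow_map h hinv i y) > c.

Definition metric_independent_expansive (X : topologicalType) (h hinv : X -> X) : Prop :=
  forall d : X -> X -> Real, compatible_metric d -> expansive_wrt h hinv d.

(* Main.v *)
Require Import Defs.
From HB Require Import structures.
From mathcomp Require Import all_boot all_order all_algebra.
From mathcomp Require Import all_classical all_reals all_analysis.
From mathcomp Require Import Rstruct Rstruct_topology lra.
From Stdlib Require List.
Set Implicit Arguments. Unset Strict Implicit. Unset Printing Implicit Defensive.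
Import Order.TTheory GRing.Theory Num.Theory.
Local Open Scope classical_set_scope.
Local Open Scope ring_scope.
Notation Real := Rdefinitions.R.

Lemma zstep (T : Type) (h hinv : T -> T) (c1 : cancel h hinv) (c2 : cancel hinv h) i x :
  zpow_map h hinv (i + 1) x = h (zpow_map h hinv i x).
Proof.
case: i => [n|[|n]].
- have -> : (Posz n + 1 = Posz n.+1)%R by rewrite -addn1 PoszD.
  by [].
- by rewrite /= c2.
- have -> : (Negz n.+1 + 1 = Negz n)%R by rewrite !NegzE; lra.
  by rewrite /= c2.
Qed.

Lemma zstepN (T : Type) (h hinv : T -> T) (c1 : cancel h hinv) (c2 : cancel hinv h) i x :
  zpow_map h hinv (i - 1) x = hinv (zpow_map h hinv i x).
Proof.
by rewrite -{2}(subrK 1 i) (zstep c1 c2) c1.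
Qed.

Lemma zadd (T : Type) (h hinv : T -> T) (c1 : cancel h hinv) (c2 : cancel hinv h) i k x :
  zpow_map h hinv (i + k) x = zpow_map h hinv i (zpow_map h hinv k x).
Proof.
elim/int_rec: i x => [|n IH|n IH] x.
- by rewrite add0r.
- by rewrite -addn1 PoszD -addrA (addrC 1) addrA (zstep c1 c2) IH -(zstep c1 c2).
- rewrite -addn1 PoszD opprD addrAC (zstepN c1 c2) IH.
  by rewrite -(zstepN c1 c2).
Qed.

Lemma zcancel (T : Type) (h hinv : T -> T) (c1 : cancel h hinv) (c2 : cancel hinv h) i x :
  zpow_map h hinv (- i) (zpow_map h hinv i x) = x.
Proof. by rewrite -(zadd c1 c2) addNr. Qed.

Lemma zmul (T : Type) (h hinv : T -> T) (c1 : cancel h hinv) (c2 : cancel hinv h) n q x :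
  zpow_map (zpow_map h hinv n) (zpow_map h hinv (- n)) q x
   = zpow_map h hinv (n * q) x.
Proof.
have ca : cancel (zpow_map h hinv n) (zpow_map h hinv (- n)) by move=> y; exact: (zcancel c1 c2).
have cb : cancel (zpow_map h hinv (- n)) (zpow_map h hinv n).
  by move=> y; have := zcancel c1 c2 (- n) y; rewrite opprK.
elim/int_rec: q x => [|m IH|m IH] x.
- by rewrite mulr0.
- by rewrite -addn1 PoszD (zstep ca cb) IH mulrDr mulr1 addrC (zadd c1 c2).
- rewrite -addn1 PoszD opprD (zstepN ca cb) IH mulrDr.
  by rewrite mulrN1 addrC (zadd c1 c2).
Qed.

Section TopoB.
Variable X : topologicalType.

Lemma ball_open (rho : X -> X -> Real) (c : compatible_metric rho) x e :
  open [set y | rho x y < e].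
Proof.
case: c => [[r0 [r1 [r2 r3]]] cc].
apply/cc => y /= hy; exists (e - rho x y); first by rewrite subr_gt0.
move=> z /= hz; have := r3 x y z; lra.
Qed.

Lemma uc (rho D : X -> X -> Real) (crho : compatible_metric rho)
  (cD : compatible_metric D) (h : X -> X) (hc : continuous h) (L : set X)
  (cL : compact L) (eps : Real) (he : 0 < eps) :
  exists2 del : Real, 0 < del & forall a b, L a -> rho a b < del -> D (h a) (h b) < eps.
Proof.
have [[_ [D1 [D2 D3]]] _] := cD.
have [[_ [r1 [r2 r3]]] cr] := crho.
pose P := (fun (del : Real) y => forall b, rho y b < del -> D (h y) (h b) < eps).
have cover : forall x, L x -> \forall x' \near x & i \near (0:Real)^'+, P i x'.
- move=> x Lx.
  have oO : open (h @^-1` [set z | D (h x) z < eps / 2]).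
    by move/continuousP: hc; apply; exact: ball_open.
  have [r r0 rs] := (cr _).1 oO x (ltac:(by rewrite /= (D1 _ _).2 //; lra)).
  exists ([set x' | rho x x' < r / 2], [set d | d < r / 2]).
    split => /=; first apply: open_nbhs_nbhs; first split.
    + exact: ball_open.
    + by rewrite /= (r1 _ _).2 //; lra.
    + by apply: nbhs_right_lt; lra.
  move=> [x' d] [/= hx' hd] b hb.
  have hb' : rho x b < r by have := r3 x x' b; lra.
  have hx'' : rho x x' < r by lra.
  have H2 : D (h x) (h b) < eps / 2 by exact: (rs _ hb').
  have H1 : D (h x) (h x') < eps / 2 by exact: (rs _ hx'').
  have := D3 (h x') (h x) (h b); rewrite (D2 (h x') (h x)); lra.
- have H : \forall F \near (0:Real)^'+, L `<=` P F.
    have NC := (compact_near_coveringP L).1 cL.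
    exact: (NC Real (0:Real)^'+ P _ cover).
  have [d [d0 Pd]] := filter_ex (filterI (nbhs_right_gt 0) H).
  by exists d => // a b La; apply: Pd.
Qed.
End TopoB.

Section Topo.
Variable X : topologicalType.

Lemma compact_list (N : X -> set X) (cN : forall z, compact (N z)) (l : seq X) :
  compact [set y | exists z, List.In z l /\ N z y].
Proof.
elim: l => [|z l IH].
  have -> : [set y | exists z, List.In z [::] /\ N z y] = set0.
    by apply/seteqP; split => y //= [? []].
  exact: compact0.
have -> : [set y | exists z0, List.In z0 (z :: l) /\ N z0 y] =
    N z `|` [set y | exists z, List.In z l /\ N z y].
  apply/seteqP; split => y /=.
    by move=> [z0 [[<-|Hin] Ny]]; [left|right; exists z0].
  by case=> [Ny|[z0 [Hin Ny]]]; [exists z; split => //; left|exists z0; split => //; right].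
exact: compactU.
Qed.

Lemma exhaust (lc : locally_compact [set: X]) (K : set X) (cK : compact K) :
  exists V : set X, exists L : set X, [/\ open V, compact L, K `<=` V & V `<=` L].
Proof.
have hN : forall x : X, exists N : set X, nbhs x N /\ compact N.
  move=> x; have [U hU [cU _]] := lc x I.
  exists U; split => //.
  move: hU; rewrite /within /=; apply: filterS => y; exact.
pose N := fun x => projT1 (cid (hN x)).
have NP : forall x, nbhs x (N x) /\ compact (N x) by move=> x; exact: (projT2 (cid (hN x))).
pose F := filter_from [set: seq X] (fun l : seq X => [set s : seq X | forall z, List.In z l -> List.In z s]).
have FF : Filter F.
  apply: filter_from_filter; first by exists [::].
  move=> i j _ _; exists (i ++ j) => // s /= Hs; split => z Hz; apply: Hs;
    apply/List.in_or_app; tauto.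
pose P := fun (s : seq X) y => exists z, List.In z s /\ (N z)° y.
have cover : forall x, K x -> \forall x' \near x & s \near F, P s x'.
  move=> x Kx.
  exists ((N x)°, [set s | List.In x s]).
    split => /=.
      apply: open_nbhs_nbhs; split; first exact: open_interior.
      exact: (NP x).1.
    by exists [:: x] => // s /=; apply; left.
  by move=> [x' s] [/= h1 h2]; exists x.
have NC := (compact_near_coveringP K).1 cK.
have [l _ Hl] := NC (seq X) F P FF cover.
have KV := Hl l (fun z hz => hz).
exists [set y | P l y], [set y | exists z, List.In z l /\ N z y]; split => //.
- have -> : [set y | P l y] = \bigcup_(z in [set z | List.In z l]) (N z)°.
    by apply/seteqP; split => y /= [z]; [case=> h1 h2; exists z|move=> h1 h2; exists z].
  apply: bigcup_open => z _; exact: open_interior.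
- by apply: compact_list => z; exact: (NP z).2.
- move=> y [z [h1 h2]]; exists z; split => //; exact: interior_subset.
Qed.
End Topo.

Definition mymin (a b : Real) := if a <= b then a else b.

Lemma mymin_cases a b : (mymin a b = a /\ a <= b) \/ (mymin a b = b /\ b < a).
Proof. by rewrite /mymin; case: leP => h; [left|right]. Qed.

Definition ieps (m : nat) : Real := 1 / (m.+1)%:R.

Lemma inv_pos (m : nat) : 0 < ieps m.
Proof. by rewrite /ieps divr_gt0 // ltr0n. Qed.

Lemma mymin_l a b : mymin a b <= a.
Proof. by case: (mymin_cases a b) => [[-> ?]|[-> ?]]; lra. Qed.
Lemma mymin_r a b : mymin a b <= b.
Proof. by case: (mymin_cases a b) => [[-> ?]|[-> ?]]; lra. Qed.
Lemma mymin_gt c a b : c < a -> c < b -> c < mymin a b.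
Proof. by case: (mymin_cases a b) => [[-> ?]|[-> ?]]. Qed.

Section Phi.
Variable X : topologicalType.
Variable rho : X -> X -> Real.
Hypothesis crho : compatible_metric rho.
Variable W : nat -> set X.

Definition term (m : nat) (o : option X) (x : X) : Real :=
  ieps m + match o with None => 1 | Some y => rho x y end.
Definition okW (m : nat) (o : option X) : Prop :=
  match o with None => True | Some y => ~ W m y end.
Definition Sset (x : X) : set Real :=
  [set r | exists m, exists o, okW m o /\ r = term m o x].
Definition phi (x : X) : Real := inf (Sset x).

Lemma rho_ge0 x y : 0 <= rho x y. Proof. by case: crho => [[]]. Qed.
Lemma rho_sym x y : rho x y = rho y x. Proof. by case: crho => [[_ [_ []]]]. Qed.
Lemma rho_tri x y z : rho x z <= rho x y + rho y z. Proof. by case: crho => [[_ [_ [_]]]]. Qed.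
Lemma rho_xx x : rho x x = 0. Proof. by case: crho => [[_ [h _]]] _; apply/h. Qed.


Lemma term_ge0 m o x : 0 <= term m o x.
Proof.
rewrite /term; have := inv_pos m; case: o => [y|] /=; last lra.
have := rho_ge0 x y; lra.
Qed.

Lemma Sset_ne x : Sset x !=set0.
Proof. by exists (term 0 None x); exists 0%N, None. Qed.

Lemma Sset_lb x : has_lbound (Sset x).
Proof. by exists 0; move=> r [m [oo [hh Hr]]]; rewrite Hr; exact: term_ge0. Qed.

Lemma phi_le m o x : okW m o -> phi x <= term m o x.
Proof. by move=> h; apply: (ge_inf (Sset_lb x)); exists m, o. Qed.

Lemma phi_ge b x : (forall m o, okW m o -> b <= term m o x) -> b <= phi x.
Proof.
move=> h; apply: lb_le_inf; first exact: Sset_ne.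
by move=> r [m [oo [hm Hr]]]; rewrite Hr; exact: h.
Qed.

Lemma phi_ge0 x : 0 <= phi x.
Proof. by apply: phi_ge => m o _; exact: term_ge0. Qed.

Lemma phi_lip x y : phi x <= phi y + rho x y.
Proof.
suff : phi x - rho x y <= phi y by lra.
apply: phi_ge => m o hm.
have H := phi_le x hm.
case: o hm H => [z|] hm H; rewrite /term /= in H *; last (have := rho_ge0 x y; lra).
have := rho_tri x y z; lra.
Qed.

Lemma phi_out m x : ~ W m x -> phi x <= ieps m.
Proof.
move=> h; have := phi_le x (h : okW m (Some x)); rewrite /term rho_xx; lra.
Qed.

Lemma ieps_mono (m M : nat) : (m <= M)%N -> ieps M <= ieps m.
Proof.
move=> h; rewrite /ieps !div1r lef_pV2 ?posrE ?ltr0n // ler_nat; by [].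
Qed.

Hypothesis hW : forall x, exists M, exists2 r, 0 < r &
  forall m y, (M <= m)%N -> rho x y < r -> W m y.

Lemma phi_pos x : 0 < phi x.
Proof.
have [M [r r0 hr]] := hW x.
have hM := inv_pos M.
have hb : 0 < mymin (ieps M) (mymin 1 r).
  by apply: mymin_gt => //; apply: mymin_gt => //; lra.
have hb1 := mymin_l (ieps M) (mymin 1 r).
have hb2 := mymin_r (ieps M) (mymin 1 r).
have hb3 := mymin_l 1 r; have hb4 := mymin_r 1 r.
suff : mymin (ieps M) (mymin 1 r) <= phi x by move=> hh; exact: (lt_le_trans hb hh).
apply: phi_ge => m o hm.
have hm0 := inv_pos m.
case: o hm => [y|] hm; rewrite /term /=; last lra.
have hy0 := rho_ge0 x y.
case: (leqP M m) => hMm.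
  have : ~ rho x y < r by move=> h; apply: hm; exact: hr.
  move/negP; rewrite -leNgt => ?; lra.
have := ieps_mono (ltnW hMm); lra.
Qed.

Definition Dm (u v : X) : Real := mymin (rho u v) (phi u + phi v).

Lemma Dm_le u v : Dm u v <= rho u v.
Proof. by rewrite /Dm; case: (mymin_cases (rho u v) (phi u + phi v)) => [[-> ?]|[-> ?]]; lra. Qed.

Lemma Dm_le2 u v : Dm u v <= phi u + phi v.
Proof. by rewrite /Dm; case: (mymin_cases (rho u v) (phi u + phi v)) => [[-> ?]|[-> ?]]; lra. Qed.

Lemma Dm_compat : compatible_metric Dm.
Proof.
have [_ cr] := crho.
split; [split; [|split; [|split]]|].
- move=> u v; rewrite /Dm; have := phi_pos u; have := phi_pos v; have := rho_ge0 u v.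
  by case: (mymin_cases (rho u v) (phi u + phi v)) => [[-> ?]|[-> ?]]; lra.
- move=> u v; split; last by move=> ->; rewrite /Dm rho_xx; have := phi_pos v;
    case: (mymin_cases 0 (phi v + phi v)) => [[-> ?]|[-> ?]]; lra.
  rewrite /Dm; have := phi_pos u; have := phi_pos v.
  case: (mymin_cases (rho u v) (phi u + phi v)) => [[-> ?]|[-> ?]]; last by move=> ? ? ?; exfalso; lra.
  by move=> _ _ h; case: crho => [[_ [hh _]]] _; apply/hh.
- by move=> u v; rewrite /Dm rho_sym (addrC (phi u)).
- move=> u v w; rewrite /Dm.
  have l1 := phi_lip u v; have l2 := phi_lip v w; have l3 := phi_lip w v.
  have l4 := phi_lip v u.
  have t := rho_tri u v w. have s1 := rho_sym u v; have s2 := rho_sym v w.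
  have p1 := phi_pos u; have p2 := phi_pos v; have p3 := phi_pos w.
  case: (mymin_cases (rho u w) (phi u + phi w)) => [[-> ?]|[-> ?]];
  case: (mymin_cases (rho u v) (phi u + phi v)) => [[-> ?]|[-> ?]];
  case: (mymin_cases (rho v w) (phi v + phi w)) => [[-> ?]|[-> ?]]; lra.
- move=> A; rewrite cr; split => hA x Ax.
  + have [e e0 he] := hA x Ax.
    have px := phi_pos x.
    exists (mymin e (phi x)).
      by case: (mymin_cases e (phi x)) => [[-> ?]|[-> ?]]; lra.
    move=> y /= hy; apply: he => /=.
    have py := phi_pos y.
    move: hy; rewrite /Dm.
    by case: (mymin_cases e (phi x)) => [[-> ?]|[-> ?]];
    case: (mymin_cases (rho x y) (phi x + phi y)) => [[-> ?]|[-> ?]]; lra.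
  + have [e e0 he] := hA x Ax.
    exists e => // y /= hy; apply: he => /=.
    have := Dm_le x y; lra.
Qed.
End Phi.

Lemma iter_cont (X : topologicalType) (h : X -> X) (hc : continuous h) k :
  continuous (iter k h).
Proof.
elim: k => [|k IH] x; first by move=> A; exact.
exact: (continuous_comp (IH x) (hc _)).
Qed.

Lemma zpow_cont (X : topologicalType) (f g : X -> X) (cf : continuous f)
  (cg : continuous g) j : continuous (zpow_map f g j).
Proof. by case: j => k; exact: iter_cont. Qed.

Lemma compact_upto (X : topologicalType) (L : nat -> set X)
  (cL : forall i, compact (L i)) m :
  compact [set y | exists2 i, (i <= m)%N & L i y].
Proof.
elim: m => [|m IH].
  have -> : [set y | exists2 i, (i <= 0)%N & L i y] = L 0%N.
    apply/seteqP; split => y /=; first by case=> i; rewrite leqn0 => /eqP ->.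
    by move=> h; exists 0%N.
  exact: cL.
have -> : [set y | exists2 i, (i <= m.+1)%N & L i y] =
   L m.+1 `|` [set y | exists2 i, (i <= m)%N & L i y].
  apply/seteqP; split => y /=.
    case=> i; rewrite leq_eqVlt => /orP [/eqP ->|hi] hy; first by left.
    by right; exists i.
  case=> [h|[i hi h]]; first by exists m.+1.
  by exists i => //; exact: leqW.
exact: compactU.
Qed.

Lemma finite_delta (P : nat -> Real -> Prop)
  (mono : forall j d d', 0 < d' -> d' <= d -> P j d -> P j d')
  (hP : forall j, exists2 d, 0 < d & P j d) N :
  exists2 d, 0 < d & forall j, (j < N)%N -> P j d.
Proof.
elim: N => [|N [d1 d10 h1]]; first by exists 1.
have [d2 d20 h2] := hP N.
exists (mymin d1 d2); first exact: mymin_gt.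
move=> j; rewrite ltnS leq_eqVlt => /orP [/eqP ->|hj].
  by apply: (mono _ d2) => //; [exact: mymin_gt|exact: mymin_r].
by apply: (mono _ d1) => //; [exact: mymin_gt|exact: mymin_l|exact: h1].
Qed.

Lemma ieps_small (c : Real) : 0 < c -> exists m, ieps m < c.
Proof.
move=> c0; exists (Num.truncn (c^-1)).
have h := truncnS_gt (c^-1).
rewrite -(ltr_pM2l c0) mulfV ?gt_eqF // in h.
rewrite /ieps ltr_pdivrMr ?ltr0n // mulrC; exact: h.
Qed.

Theorem mainTheorem8 (X : topologicalType) (f g : X -> X) :
  metrizable X ->
  locally_compact [set: X] ->
  sigma_compact X ->
  homeomorphism_with_inverse f g ->
  metric_independent_expansive f g ->
  forall n : int, n != 0 ->
    metric_independent_expansive (zpow_map f g n) (zpow_map f g (- n)).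
Proof.
move=> _ lc [K [cK hK]] [cf [cg [c1 c2]]] hexp n n0 rho crho.
have [_ cr] := crho.
have HVL : forall m, exists VL : set X * set X,
    [/\ open VL.1, compact VL.2, K m `<=` VL.1 & VL.1 `<=` VL.2].
  move=> m; have [V [L [h1 h2 h3 h4]]] := exhaust lc (cK m).
  by exists (V, L).
have [VL hVL] := choice HVL.
pose W := fun m => [set y | exists2 i, (i <= m)%N & (VL i).1 y].
pose Lc := fun m => [set y | exists2 i, (i <= m)%N & (VL i).2 y].
have cLc : forall m, compact (Lc m).
  by move=> m; apply: compact_upto => i; have [] := hVL i.
have WL : forall m, W m `<=` Lc m.
  by move=> m y [i hi hy]; exists i => //; have [_ _ _] := hVL i; apply.
have hW : forall x, exists M, exists2 r, 0 < r &
    forall m y, (M <= m)%N -> rho x y < r -> W m y.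
  move=> x.
  have : (\bigcup_n K n) x by rewrite hK.
  case=> M _ KMx.
  have [oV _ KV _] := hVL M.
  have [r r0 hr] := (cr _).1 oV x (KV _ KMx).
  by exists M, r => // m y hm hy; exists M => //; exact: hr.
pose D := Dm rho W.
have cD : compatible_metric D by exact: Dm_compat.
have [c c0 hc] := hexp D cD.
have [m0 hm0] := @ieps_small (c / 2) (ltac:(lra)).
pose F := zpow_map f g.
pose Lj := fun j : nat => F (- (Posz j)) @` Lc m0.
have cLj : forall j : nat, compact (Lj j).
  move=> j; apply: continuous_compact; last exact: cLc.
  by apply: continuous_subspaceT; exact: zpow_cont.
pose P := fun (j : nat) (d : Real) => forall a b, Lj j a -> rho a b < d ->
   D (F j a) (F j b) < c.
have [d d0 hd] : exists2 d, 0 < d & forall j, (j < `|n|)%N -> P j d.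
  apply: finite_delta.
    by move=> j d1 d2 d20 hle hP a b La hab; apply: hP => //; lra.
  move=> j; apply: (uc crho cD); [exact: zpow_cont|exact: cLj|exact: c0].
exists (d / 2); first lra.
move=> x y xy.
have [i hi] := hc x y xy.
set q := (i %/ n)%Z.
set j := (i %% n)%Z.
have j0 : 0 <= j by exact: modz_ge0.
have jn : j < `|n| by exact: ltz_mod.
have hij : i = j + n * q by rewrite /j /q addrC mulrC -divz_eq.
exists q.
rewrite !(zmul c1 c2).
set a := F (n * q) x; set b := F (n * q) y.
have [k hk] : exists k : nat, j = Posz k by exists `|j|%N; rewrite gez0_abs.
have kn : (k < `|n|)%N by rewrite -ltz_nat -hk abszE.
have Ha : F i x = F k a by rewrite hij hk /F (zadd c1 c2).
have Hb : F i y = F k b by rewrite hij hk /F (zadd c1 c2).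
rewrite -/F Ha Hb in hi.
have hdk := hd k kn.
have : D (F k a) (F k b) <= phi rho W (F k a) + phi rho W (F k b) by exact: Dm_le2.
have pu := phi_pos crho hW (F k a); have pv := phi_pos crho hW (F k b).
move=> hsum.
have inW : forall u, c / 2 < phi rho W u -> W m0 u.
  move=> u hu; apply: contrapT => hn.
  have := phi_out crho hn; clear -hu hm0; lra.
have sym := rho_sym crho a b.
have DS : D (F k b) (F k a) = D (F k a) (F k b).
  by have [[_ [_ [hs _]]] _] := cD; exact: hs.
have [ha|hb] : c / 2 < phi rho W (F k a) \/ c / 2 < phi rho W (F k b).
  case: (leP (phi rho W (F k a)) (c / 2)) => h1; last by left.
  case: (leP (phi rho W (F k b)) (c / 2)) => h2; last by right.
  exfalso; clear -hi hsum h1 h2; lra.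
- have La : Lj k a.
    by exists (F k a); [apply: WL; exact: inW|rewrite /F (zcancel c1 c2)].
  have : ~ rho a b < d by move=> h; have := hdk a b La h; clear -hi; lra.
  move/negP; rewrite -leNgt => hh; clear -hh d0; lra.
- have Lb : Lj k b.
    by exists (F k b); [apply: WL; exact: inW|rewrite /F (zcancel c1 c2)].
  have : ~ rho b a < d by move=> h; have := hdk b a Lb h; rewrite DS; clear -hi; lra.
  move/negP; rewrite -leNgt => hh; rewrite sym; clear -hh d0; lra.
Qed.
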